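(* For every $\epsilon>0$ there is an instance with uniform weights on which, setting $$A=\mathrm{opt}_M\text{-}\mathrm{MAX}=\mathrm{opt}_M\text{-}\mathrm{SUM}=\mathrm{opt}_D\text{-}\mathrm{WMP}=\mathrm{opt}_D\text{-}\mathrm{EMP}=\mathrm{opt}_D\text{-}\mathrm{MWP}$$ and $$B=\mathrm{opt}_D\text{-}\mathrm{WEP}=\mathrm{opt}_D\text{-}\mathrm{EEP}=\mathrm{opt}_D\text{-}\mathrm{MEP}=\mathrm{opt}\text{-}\mathrm{MAX}=\mathrm{opt}\text{-}\mathrm{SUM}$$ (all the displayed equalities holding), we have $A\ge(2-\epsilon)B$.
   Context: An instance consists of a finite set $E$ of $n$ elements and $m$ tests, test $i$ being a subset $s_i\subseteq E$; uniform weights mean $p_e=1/n$ for SUM objectives (EMP, MEP, EEP) and $p_e=1$ for MAX objectives (WMP, MWP, WEP). A schedule is an infinite test sequence; deterministic schedules are fixed sequences; stochastic schedules choose $\sigma_t$ randomly depending on the past; memoryless schedules draw each $\sigma_t$ i.i.d. from a distribution on tests. Detection time $T(e,t)=\mathbb{E}[1+\min\{h\ge0:e\in s_{\sigma_{t+h}}\}]$, $M_t[e]=\sup_tT(e,t)$, $E_t[e]=\lim_H\frac1H\sum_{t\le H}T(e,t)$; valid schedules have $M_t[e]<\infty$ and $E_t[e]$ existing for all $e$, and convergent test frequencies. $\mathrm{EMP}=\sum_ep_eM_t[e]$, $\mathrm{MEP}=\sup_t\sum_ep_eT(e,t)$, $\mathrm{EEP}=\sum_ep_eE_t[e]$, $\mathrm{WMP}=\sup_{e,t}p_eT(e,t)$,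 $\mathrm{WEP}=\max_ep_eE_t[e]$, $\mathrm{MWP}=\lim_H\frac1H\sum_{t\le H}\max_ep_eT(e,t)$. $\mathrm{opt}_D\text{-}X$: infimum of $X$ over valid deterministic schedules; $\mathrm{opt}\text{-}\mathrm{SUM}$, $\mathrm{opt}\text{-}\mathrm{MAX}$: infima of EEP, WEP over valid stochastic schedules; $\mathrm{opt}_M\text{-}\mathrm{SUM}$, $\mathrm{opt}_M\text{-}\mathrm{MAX}$: infima of EEP, WEP over memoryless schedules. *)

(* Defs.v *)
From mathcomp Require Import all_boot all_order all_algebra.
From mathcomp Require Import all_classical all_reals all_analysis.
Set Implicit Arguments. Unset Strict Implicit. Unset Printing Implicit Defensive.
Import Order.TTheory GRing.Theory Num.Theory.
Import numFieldNormedType.Exports.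
Local Open Scope ring_scope.
Local Open Scope ereal_scope.

(* An instance: elements 'I_n, tests s : 'I_m -> {set 'I_n}.
   A (stochastic) schedule is a policy: given the past history
   (sigma_0, ..., sigma_{t-1}) it gives the distribution of sigma_t. *)
Section Schedules.
Variables (R : realType) (n m : nat) (s : 'I_m -> {set 'I_n}).

Definition policy := seq 'I_m -> {ffun 'I_m -> R}.

Definition is_dist (q : {ffun 'I_m -> R}) : Prop :=
  (forall i, (0 <= q i)%R) /\ (\sum_i q i)%R = 1%R.

Definition is_policy (pol : policy) : Prop := forall h, is_dist (pol h).

Definition det_pol (sigma : nat -> 'I_m) : policy :=
  fun h => [ffun i => ((i == sigma (size h))%:R)%R].

Definition mless_pol (q : {ffun 'I_m -> R}) : policy := fun _ => q.

Definition hprob (pol : policy) k (w : k.-tuple 'I_m) : R :=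
  (\prod_(j < k) pol (take j w) (tnth w j))%R.

Definition ptest (pol : policy) (i : 'I_m) (t : nat) : R :=
  (\sum_(w : (t.+1).-tuple 'I_m) hprob pol w * ((tnth w ord_max == i)%:R))%R.

Definition pmiss (pol : policy) (e : 'I_n) (t h : nat) : R :=
  (\sum_(w : (t + h).-tuple 'I_m) hprob pol w *
     ([forall j : 'I_(t + h), (t <= j)%N ==> (e \notin s (tnth w j))]%:R))%R.

(* T(e,t) = E[1 + min{h >= 0 : e in s_{sigma_{t+h}}}] = sum_{h>=0} P(min >= h) *)
Definition Tdet (pol : policy) (e : 'I_n) (t : nat) : \bar R :=
  \sum_(0 <= h <oo) (pmiss pol e t h)%:E.

Definition cesaro (f : nat -> \bar R) (H : nat) : \bar R :=
  ((H%:R)^-1)%:E * \sum_(t < H) f t.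

Definition Mt (pol : policy) (e : 'I_n) : \bar R := ereal_sup (range (Tdet pol e)).
Definition Et (pol : policy) (e : 'I_n) : \bar R := limn (cesaro (Tdet pol e)).

Definition freq (pol : policy) (i : 'I_m) (H : nat) : R :=
  ((H%:R)^-1 * \sum_(t < H) ptest pol i t)%R.

Definition valid (pol : policy) : Prop :=
  is_policy pol /\
  (forall e, Mt pol e < +oo) /\
  (forall e, cvgn (cesaro (Tdet pol e))) /\
  (forall i, cvgn (freq pol i)).

(* objectives, uniform weights: p_e = 1/n for SUM, p_e = 1 for MAX *)
Definition pw : \bar R := ((n%:R)^-1)%:E.
Definition EMP pol := \sum_(e < n) pw * Mt pol e.
Definition MEP pol := ereal_sup (range (fun t => \sum_(e < n) pw * Tdet pol e t)).
Definition EEP pol := \sum_(e < n) pw * Et pol e.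
Definition WMP pol := ereal_sup [set x | exists (e : 'I_n) (t : nat), x = Tdet pol e t].
Definition WEP pol := \big[maxe/-oo]_(e < n) Et pol e.
Definition maxT pol t := \big[maxe/-oo]_(e < n) Tdet pol e t.
Definition MWP pol := limn (cesaro (maxT pol)).

Definition det_valid : set (nat -> 'I_m) := [set sigma | valid (det_pol sigma)].
Definition optD (X : policy -> \bar R) :=
  ereal_inf ((fun sigma => X (det_pol sigma)) @` det_valid).
Definition optD_EMP := optD EMP.
Definition optD_MEP := optD MEP.
Definition optD_EEP := optD EEP.
Definition optD_WMP := optD WMP.
Definition optD_WEP := optD WEP.
(* MWP is a limit: only schedules for which this limit exists are admitted *)
Definition optD_MWP :=
  ereal_inf ((fun sigma => MWP (det_pol sigma)) @`
    [set sigma | det_valid sigma /\ cvgn (cesaro (maxT (det_pol sigma)))]).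
Definition opt_SUM := ereal_inf ((fun pol => EEP pol) @` [set pol | valid pol]).
Definition opt_MAX := ereal_inf ((fun pol => WEP pol) @` [set pol | valid pol]).
Definition optM_SUM := ereal_inf ((fun q => EEP (mless_pol q)) @` [set q | is_dist q]).
Definition optM_MAX := ereal_inf ((fun q => WEP (mless_pol q)) @` [set q | is_dist q]).

End Schedules.

(* Main.v *)
Require Import Defs.
From mathcomp Require Import all_boot all_order all_algebra.
From mathcomp Require Import all_classical all_reals all_analysis.
From mathcomp Require Import ring lra zify.
Import Order.TTheory GRing.Theory Num.Theory.
Import numFieldNormedType.Exports.
Local Open Scope ring_scope.
Set Implicit Arguments. Unset Strict Implicit. Unset Printing Implicit Defensive.

Section Gen.
Variables (R : realType) (m : nat).

Lemma sum_tupleS (k : nat) (F : k.+1.-tuple 'I_m -> R) :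
  \sum_(t : k.+1.-tuple 'I_m) F t =
  \sum_(w : k.-tuple 'I_m) \sum_(x : 'I_m) F [tuple of rcons w x].
Proof.
rewrite pair_big /=.
pose h (p : k.-tuple 'I_m * 'I_m) : k.+1.-tuple 'I_m := [tuple of rcons p.1 p.2].
pose g (t : k.+1.-tuple 'I_m) : k.-tuple 'I_m * 'I_m :=
  ([tuple tnth t (widen_ord (leqnSn k) j) | j < k], tnth t ord_max).
rewrite (reindex h) //.
exists g => [[w x]|t] _.
- rewrite /g /h /=; congr (_, _).
  + apply: eq_from_tnth => j; rewrite tnth_mktuple.
    rewrite !(tnth_nth x) /= nth_rcons size_tuple /=.
    by case: j => j /= ->.
  + rewrite (tnth_nth x) /= nth_rcons size_tuple ltnn eqxx //.
- apply: eq_from_tnth => j.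
  rewrite /h /g /= (tnth_nth (tnth t j)) /= nth_rcons size_tuple.
  rewrite card_ord; case: ltnP => [jk|kj].
    rewrite (nth_map (Ordinal jk)) ?size_enum_ord //.
    rewrite -[nat_of_ord j]/(nat_of_ord (Ordinal jk)) nth_ord_enum.
    by congr tnth; apply: val_inj.
  have jk : nat_of_ord j = k by apply/eqP; rewrite eqn_leq kj -ltnS ltn_ord.
  rewrite jk eqxx; congr tnth; apply: val_inj => /=; by rewrite jk.
Qed.


Lemma hprob_rcons (pol : policy R m) k (w : k.-tuple 'I_m) x :
  hprob pol [tuple of rcons w x] = hprob pol w * pol w x.
Proof.
rewrite /hprob big_ord_recr /=; congr (_ * _).
  apply: eq_bigr => j _; congr (pol _ _).
    by rewrite -cats1 takel_cat // size_tuple ltnW.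
  rewrite !(tnth_nth x) /= nth_rcons size_tuple /=.
  by case: j => j /= ->.
congr (pol _ _).
  by rewrite /= -cats1 takel_cat ?size_tuple // take_oversize ?size_tuple.
by rewrite (tnth_nth x) /= nth_rcons size_tuple ltnn eqxx.
Qed.

Lemma sum_tuple0 (F : 0.-tuple 'I_m -> R) : \sum_(w : 0.-tuple 'I_m) F w = F [tuple].
Proof.
rewrite (eq_bigl (pred1 [tuple])) ?big_pred1_eq // => w /=.
by rewrite [w]tuple0 /=; apply/esym/eqP.
Qed.

Lemma hprob_ge0 (pol : policy R m) k (w : k.-tuple 'I_m) :
  is_policy pol -> 0 <= hprob pol w.
Proof. by move=> P; apply: prodr_ge0 => j _; case: (P (take j w)). Qed.

Lemma sum_hprob (pol : policy R m) k : is_policy pol ->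
  \sum_(w : k.-tuple 'I_m) hprob pol w = 1.
Proof.
move=> P; elim: k => [|k IH].
  by rewrite sum_tuple0 /hprob big_ord0.
rewrite sum_tupleS -[RHS]IH; apply: eq_bigr => w _.
under eq_bigr do rewrite hprob_rcons.
by rewrite -mulr_sumr; case: (P w) => _ ->; rewrite mulr1.
Qed.

Lemma hprob_mless (q : {ffun 'I_m -> R}) k (w : k.-tuple 'I_m) :
  hprob (mless_pol q) w = \prod_(j < k) q (tnth w j).
Proof. by []. Qed.

Lemma sum_mless_prod (q : {ffun 'I_m -> R}) k (g : nat -> 'I_m -> R) :
  \sum_(w : k.-tuple 'I_m) hprob (mless_pol q) w * \prod_(j < k) g j (tnth w j) =
  \prod_(j < k) \sum_(x : 'I_m) q x * g j x.
Proof.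
elim: k => [|k IH].
  by rewrite sum_tuple0 /hprob !big_ord0 mulr1.
rewrite sum_tupleS big_ord_recr /= -IH mulr_suml; apply: eq_bigr => w _.
rewrite mulr_sumr; apply: eq_bigr => x _.
rewrite hprob_rcons big_ord_recr /=.
have -> : \prod_(i < k) g (widen_ord (leqnSn k) i) (tnth [tuple of rcons w x] (widen_ord (leqnSn k) i))
  = \prod_(i < k) g i (tnth w i).
  apply: eq_bigr => j _; rewrite !(tnth_nth x) /= nth_rcons size_tuple /=.
  by case: j => j /= ->.
rewrite (tnth_nth x) /= nth_rcons size_tuple ltnn eqxx /mless_pol.
by rewrite mulrACA.
Qed.

Lemma hprob_det (sig : nat -> 'I_m) k (w : k.-tuple 'I_m) :
  hprob (det_pol R sig) w = ((w == [tuple sig j | j < k]) : nat)%:R.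
Proof.
rewrite /hprob /det_pol.
under eq_bigr => j _ do rewrite ffunE size_take size_tuple ltn_ord.
case: eqP => [->|ne].
  by rewrite big1 // => j _; rewrite tnth_mktuple eqxx.
have [j Hj] : exists j : 'I_k, tnth w j != sig j.
  apply/existsP; apply: contra_notT ne => /existsPn H.
  apply: eq_from_tnth => j; rewrite tnth_mktuple; apply/eqP.
  by move: (H j); rewrite negbK.
by rewrite (bigD1 j) //= (negbTE Hj) mul0r.
Qed.

Lemma sum_det (sig : nat -> 'I_m) k (F : k.-tuple 'I_m -> R) :
  \sum_(w : k.-tuple 'I_m) hprob (det_pol R sig) w * F w = F [tuple sig j | j < k].
Proof.
rewrite (bigD1 [tuple sig j | j < k]) //= hprob_det eqxx mul1r big1 ?addr0 //.
by move=> w /negbTE Hw; rewrite hprob_det Hw mul0r.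
Qed.

Lemma det_policy (sig : nat -> 'I_m) : is_policy (det_pol R sig).
Proof.
move=> h; split => [i|]; first by rewrite ffunE ler0n.
rewrite (bigD1 (sig (size h))) //= ffunE eqxx big1 ?addr0 // => i Hi.
by rewrite ffunE (negbTE Hi).
Qed.

Lemma ptest_det (sig : nat -> 'I_m) i t : ptest (det_pol R sig) i t = ((sig t == i) : nat)%:R.
Proof. by rewrite /ptest sum_det tnth_mktuple. Qed.

End Gen.

Section Gen2.
Variables (R : realType) (n m : nat) (s : 'I_m -> {set 'I_n}).

Lemma pmiss_det (sig : nat -> 'I_m) e t h :
  pmiss s (det_pol R sig) e t h =
  (([forall j : 'I_h, e \notin s (sig (t + j)%N)]) : nat)%:R.
Proof.
rewrite /pmiss sum_det; congr ((nat_of_bool _)%:R).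
apply/forallP/forallP => H j.
  by move: (H (rshift t j)); rewrite /= tnth_mktuple leq_addr.
apply/implyP => tj; rewrite tnth_mktuple.
have jh : (j - t < h)%N by rewrite ltn_subLR // ltn_ord.
by move: (H (Ordinal jh)); rewrite /= subnKC.
Qed.

Lemma pmiss_ge0 (pol : policy R m) e t h : is_policy pol -> 0 <= pmiss s pol e t h.
Proof. by move=> P; apply: sumr_ge0 => w _; rewrite mulr_ge0 ?hprob_ge0. Qed.

End Gen2.

Lemma sum_ind_card (T : finType) (P : pred T) : (\sum_(e : T) (P e : nat) = #|P|)%N.
Proof. rewrite -sum1_card [in RHS]big_mkcond /=; apply: eq_bigr => e _. rewrite unfold_in. by case: (P e). Qed.

Lemma sum_succ (R : realType) k : (\sum_(i < k) (i.+1)%:R = k%:R * (k.+1)%:R / 2 :> R)%R.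
Proof.
elim: k => [|k IH]; first by rewrite big_ord0 mul0r mul0r.
rewrite big_ord_recr /= IH.
rewrite -!natr1.
by field.
Qed.

Lemma sum_rev (R : realType) k : (\sum_(i < k) (k - i)%:R = k%:R * (k.+1)%:R / 2 :> R)%R.
Proof.
rewrite -sum_succ (reindex_inj rev_ord_inj) /=; apply: eq_bigr => i _.
congr (_%:R); case: i => i /= Hi; lia.
Qed.

Section Inst.
Variables (R : realType) (K : nat).
Local Notation N := K.+1.
Definition sI : 'I_N -> {set 'I_N} := fun i => [set i].

Lemma count_nohit t h (w : (t + h).-tuple 'I_N) :
  (N - h)%:R <= \sum_(e : 'I_N)
     (([forall j : 'I_(t + h), (t <= j)%N ==> (e \notin sI (tnth w j))]) : nat)%:R :> R.
Proof.
pose H := [set tnth w (rshift t j) | j : 'I_h].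
have -> : \sum_(e : 'I_N)
     (([forall j : 'I_(t + h), (t <= j)%N ==> (e \notin sI (tnth w j))]) : nat)%:R
   = \sum_(e : 'I_N) ((e \in ~: H) : nat)%:R :> R.
  apply: eq_bigr => e _; congr ((nat_of_bool _)%:R).
  rewrite finset.in_setC; apply/forallP/idP => [Hf|He j].
    apply/imsetP => -[j _ ej]; move: (Hf (rshift t j)).
    by rewrite /= leq_addr /sI finset.in_set1 ej eqxx.
  apply/implyP => tj; rewrite /sI finset.in_set1; apply: contra He => /eqP ->.
  have jh : (j - t < h)%N by rewrite ltn_subLR // ltn_ord.
  apply/imsetP; exists (Ordinal jh) => //; congr tnth; apply: val_inj => /=.
  by rewrite subnKC.
rewrite -natr_sum sum_ind_card ler_nat.
have := cardsC H; rewrite card_ord => HC.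
have Hh : (#|H| <= h)%N by rewrite (leq_trans (leq_imset_card _ _)) // card_ord.
rewrite (@eq_card _ _ (~: H)) //; move: HC Hh; lia.
Qed.

Lemma sum_pmiss_ge (pol : policy R N) t h : is_policy pol ->
  (N - h)%:R <= \sum_(e : 'I_N) pmiss sI pol e t h.
Proof.
move=> P; rewrite /pmiss exchange_big /=.
apply: (@le_trans _ _ (\sum_(w : (t+h).-tuple 'I_N) hprob pol w * (N - h)%:R)).
  by rewrite -mulr_suml sum_hprob // mul1r.
apply: ler_sum => w _; rewrite -mulr_sumr.
by apply: ler_wpM2l; [exact: hprob_ge0|exact: count_nohit].
Qed.


Lemma sumT_ge (pol : policy R N) t : is_policy pol ->
  ((N%:R * N.+1%:R / 2)%:E <= \sum_(e < N) Tdet sI pol e t)%E.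
Proof.
move=> P; rewrite /Tdet -nneseries_sum; last by move=> e h _; rewrite lee_fin pmiss_ge0.
have H := @nneseries_lim_ge R (fun j => (\sum_i (pmiss sI pol i t j)%:E)%E) xpredT 0 N.
apply: le_trans (H _); last first.
  by move=> h _ _; apply: sume_ge0 => e _; rewrite lee_fin pmiss_ge0.
rewrite -sum_rev big_mkord -sumEFin; apply: lee_sum => h _.
by rewrite sumEFin lee_fin sum_pmiss_ge.
Qed.


Definition rr (t : nat) : 'I_N := Ordinal (ltn_pmod t (ltn0Sn K)).
Definition dd (e : 'I_N) (t : nat) : nat := ((e + N - t %% N) %% N)%N.

Lemma dd_lt e t : (dd e t < N)%N.
Proof. exact: ltn_pmod. Qed.

Lemma dd_spec (e : 'I_N) t : ((t + dd e t) %% N = e)%N.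
Proof.
rewrite /dd modnDmr {1}(divn_eq t N) -addnA subnKC; last first.
  by apply: leq_trans (ltnW (ltn_pmod t (ltn0Sn K))) _; rewrite leq_addl.
by rewrite modnMDl modnDr modn_small.
Qed.

Lemma dd_uniq (e : 'I_N) t i : (i < N)%N -> ((t + i) %% N = e)%N -> i = dd e t.
Proof.
move=> iN H.
have : (t + i == t + dd e t %[mod N])%N by rewrite H dd_spec.
by rewrite eqn_modDl !modn_small ?dd_lt // => /eqP.
Qed.

Lemma nohit_rr (e : 'I_N) t h :
  [forall j : 'I_h, e \notin sI (rr (t + j)%N)] = (h <= dd e t)%N.
Proof.
apply/forallP/idP => [H|hd j].
  rewrite leqNgt; apply/negP => dh.
  move: (H (Ordinal dh)); rewrite /sI finset.in_set1 /=; apply: negP; rewrite negbK.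
  by apply/eqP; apply: val_inj; rewrite /= dd_spec.
rewrite /sI finset.in_set1; apply/negP => /eqP He.
have jd : nat_of_ord j = dd e t.
  apply: dd_uniq; last by rewrite He.
  by apply: leq_trans (ltn_ord j) (leq_trans hd (ltnW (dd_lt e t))).
by move: (ltn_ord j); rewrite jd ltnNge hd.
Qed.

Lemma T_rr (e : 'I_N) t : Tdet sI (det_pol R rr) e t = ((dd e t).+1%:R)%:E.
Proof.
rewrite /Tdet.
under eq_eseriesr do rewrite pmiss_det nohit_rr.
rewrite (nneseries_split 0 (dd e t).+1); last by move=> k _; rewrite lee_fin ler0n.
rewrite eseries0 ?adde0; last first.
  by move=> i; rewrite add0n => di _; rewrite leqNgt di.
rewrite add0n big_mkord sumEFin; congr (_%:E).
under eq_bigr => i _ do rewrite -ltnS ltn_ord /=.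
by rewrite sumr_const card_ord.
Qed.

End Inst.

Section Periodic.
Variables (R : realType) (p : nat) (f : nat -> R).
Hypothesis p0 : (0 < p)%N.
Hypothesis fper : forall t, f (t + p)%N = f t.

Let c := p%:R^-1 * \sum_(t < p) f t.
Let g t := f t - c.
Let G H := \sum_(t < H) g t.

Lemma window0 H : \sum_(t < p) g (H + t)%N = 0.
Proof.
elim: H => [|H IH].
  rewrite /g sumrB sumr_const card_ord /c.
  under eq_bigr do rewrite add0n.
  rewrite -[_ *+ p]mulr_natr; field; by rewrite pnatr_eq0 -lt0n.
have E1 : \sum_(t < p.+1) g (H + t)%N = g (H + 0)%N + \sum_(t < p) g (H + t.+1)%N.
  by rewrite big_ord_recl.
have E2 : \sum_(t < p.+1) g (H + t)%N = \sum_(t < p) g (H + t)%N + g (H + p)%N.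
  by rewrite big_ord_recr.
have : \sum_(t < p) g (H.+1 + t)%N = \sum_(t < p) g (H + t)%N + g (H + p)%N - g (H + 0)%N.
  under eq_bigr do rewrite addSnnS.
  by rewrite -E2 E1 addrAC subrr add0r.
move=> ->; rewrite IH /g fper addn0; ring.
Qed.

Lemma G_per H : G (H + p)%N = G H.
Proof.
rewrite /G big_split_ord /=.
under [X in _ + X = _]eq_bigr do rewrite /=.
by rewrite window0 addr0.
Qed.

Lemma G_mod H : G H = G (H %% p)%N.
Proof.
rewrite {1}(divn_eq H p); elim: (H %/ p)%N => [|q IH]; first by rewrite mul0n add0n.
by rewrite mulSn -addnA [(p + _)%N]addnC G_per.
Qed.

Let M := \sum_(t < p) `|g t|.

Lemma G_bound H : `|G H| <= M.
Proof.
rewrite G_mod; set r := (H %% p)%N.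
have rp : (r <= p)%N by rewrite ltnW // ltn_pmod.
apply: le_trans (ler_norm_sum _ _ _) _.
rewrite /M -(subnKC rp) big_split_ord /= lerDl.
by apply: sumr_ge0 => i _.
Qed.

Lemma cesaro_real :
  ((fun H : nat => (H%:R^-1 * \sum_(t < H) f t : R)) @ \oo --> (c : R))%classic.
Proof.
apply/cvgrPdist_le => e e0.
have [N0 HN0] : exists N0 : nat, M / e < N0%:R.
  by exists (Num.truncn (M / e)).+1; rewrite real_truncnS_gt // num_real.
exists N0.+1 => // H /= NH.
have H0 : (0 < H)%N by apply: leq_trans NH.
have -> : c - H%:R^-1 * \sum_(t < H) f t = - (H%:R^-1 * G H).
  rewrite /G /g sumrB sumr_const card_ord.
  rewrite -[_ *+ H]mulr_natr; field.
  by rewrite pnatr_eq0 -lt0n.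
rewrite normrN normrM normfV normr_nat.
have Hpos : (0 < H%:R :> R) by rewrite ltr0n.
rewrite ler_pdivrMl // ; apply: le_trans (G_bound H) _.
rewrite -ler_pdivrMr // ; apply: (le_trans (ltW HN0)).
by rewrite ler_nat ltnW.
Qed.

End Periodic.

Section CesE.
Variables (R : realType).

Lemma cesaro_EFin (f : nat -> R) H :
  Defs.cesaro (fun t => (f t)%:E) H = (H%:R^-1 * \sum_(t < H) f t)%:E.
Proof. by rewrite /Defs.cesaro sumEFin EFinM. Qed.

Lemma cesaro_per_cvg (f : nat -> R) p : (0 < p)%N -> (forall t, f (t + p)%N = f t) ->
  (Defs.cesaro (fun t => (f t)%:E) @ \oo --> (p%:R^-1 * \sum_(t < p) f t)%:E)%classic.
Proof.
move=> p0 fper.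
rewrite (_ : Defs.cesaro _ = fun H => (H%:R^-1 * \sum_(t < H) f t)%:E); last first.
  by apply/funext => H; exact: cesaro_EFin.
apply: cvg_EFin; first by exists 0.
exact: cesaro_real.
Qed.

Lemma cesaro_per (f : nat -> R) p : (0 < p)%N -> (forall t, f (t + p)%N = f t) ->
  cvgn (Defs.cesaro (fun t => (f t)%:E)) /\
  limn (Defs.cesaro (fun t => (f t)%:E)) = (p%:R^-1 * \sum_(t < p) f t)%:E.
Proof.
move=> p0 fper; have H := cesaro_per_cvg p0 fper.
split; last exact: cvg_lim.
by apply/cvg_ex; exists (p%:R^-1 * \sum_(t < p) f t)%:E.
Qed.

Lemma cesaro_real_cvg (f : nat -> R) p : (0 < p)%N -> (forall t, f (t + p)%N = f t) ->
  cvgn (fun H : nat => (H%:R^-1 * \sum_(t < H) f t : R)).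
Proof. by move=> p0 fper; apply/cvg_ex; exists (p%:R^-1 * \sum_(t < p) f t); exact: cesaro_real. Qed.

End CesE.

Section BigMax.
Variable (R : realType).
Local Open Scope ereal_scope.

Lemma bigmaxe_le n (x : 'I_n -> \bar R) c :
  (forall e, x e <= c) -> \big[maxe/-oo]_(e < n) x e <= c.
Proof.
move=> H; elim/big_ind: _ => //; first exact: leNye.
by move=> a b Ha Hb; rewrite ge_max Ha Hb.
Qed.

Lemma le_bigmaxe n (x : 'I_n -> \bar R) i : x i <= \big[maxe/-oo]_(e < n) x e.
Proof. by rewrite (bigD1 i) //= le_max lexx. Qed.

Lemma bigmaxe_const k (c : \bar R) : \big[maxe/-oo]_(e < k.+1) c = c.
Proof.
apply/le_anti/andP; split; first exact: bigmaxe_le.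
exact: (le_bigmaxe (fun _ => c) ord0).
Qed.

Lemma sum_pw_fin n (x : 'I_n -> R) : (0 < n)%N ->
  \sum_(e < n) pw R n * (x e)%:E = (n%:R^-1 * \sum_(e < n) x e)%:E.
Proof.
move=> n0; rewrite /pw; under eq_bigr do rewrite -EFinM.
by rewrite sumEFin mulr_sumr.
Qed.

End BigMax.

Section RR.
Variables (R : realType) (K : nat).
Local Notation N := K.+1.
Local Notation pol := (det_pol R (rr K)).
Local Notation sI := (@sI K).

Lemma dd_per (e : 'I_N) t : dd e (t + N) = dd e t.
Proof. by rewrite /dd modnDr. Qed.

Lemma rr_per t : rr K (t + N) = rr K t.
Proof. by apply: val_inj; rewrite /= modnDr. Qed.

Lemma dd_max (e : 'I_N) : dd e e.+1 = K.
Proof.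
apply/esym/dd_uniq => //; rewrite addSnnS modnDr modn_small //.
Qed.

Lemma dd_max2 t : dd (rr K (t + K)) t = K.
Proof. by apply/esym/dd_uniq. Qed.

Lemma dd_le (e : 'I_N) t : (dd e t <= K)%N.
Proof. by rewrite -ltnS dd_lt. Qed.

Lemma sum_dd_e t : \sum_(e < N) ((dd e t).+1)%:R = N%:R * N.+1%:R / 2 :> R.
Proof.
rewrite -sum_succ.
have inj : injective (fun e : 'I_N => Ordinal (dd_lt e t)).
  move=> e1 e2 /(congr1 val) /= E.
  by apply: val_inj; rewrite /= -(dd_spec e1 t) E dd_spec.
by rewrite [RHS](reindex_inj inj).
Qed.

Lemma sum_dd_t (e : 'I_N) : \sum_(t < N) ((dd e t).+1)%:R = N%:R * N.+1%:R / 2 :> R.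
Proof.
rewrite -sum_succ.
have inj : injective (fun t : 'I_N => Ordinal (dd_lt e t)).
  move=> t1 t2 /(congr1 val) /= E.
  have := dd_spec e t1; rewrite E -(dd_spec e t2) => /eqP.
  rewrite eqn_modDr !modn_small // => /eqP; exact: val_inj.
by rewrite [RHS](reindex_inj inj).
Qed.

Local Open Scope ereal_scope.

Lemma T_rr_fun (e : 'I_N) : Tdet sI pol e = fun t => ((dd e t).+1%:R)%:E.
Proof. by apply/funext => t; rewrite T_rr. Qed.

Lemma T_rr_le (e : 'I_N) t : Tdet sI pol e t <= N%:R%:E.
Proof. by rewrite T_rr lee_fin ler_nat ltnS dd_le. Qed.

Lemma Mt_rr (e : 'I_N) : Mt sI pol e = N%:R%:E.
Proof.
apply/le_anti/andP; split.
  by apply: ge_ereal_sup => _ [t _ <-]; exact: T_rr_le.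
apply: ereal_sup_ubound; exists e.+1 => //.
by rewrite T_rr dd_max.
Qed.

Lemma Et_rr (e : 'I_N) : cvgn (Defs.cesaro (Tdet sI pol e)) /\
  Et sI pol e = (N.+1%:R / 2)%:E.
Proof.
rewrite /Et T_rr_fun.
have [H1 H2] := cesaro_per (f := fun t => ((dd e t).+1%:R : R)) (ltn0Sn K) (fun t => congr1 (fun x => (x.+1)%:R) (dd_per e t)).
split => //; rewrite H2 sum_dd_t; congr (_%:E).
by field.
Qed.

Lemma rr_valid : valid sI pol.
Proof.
split; first exact: det_policy.
split; first by move=> e; rewrite Mt_rr ltry.
split; first by move=> e; case: (Et_rr e).
move=> i; rewrite /freq.
under eq_fun do under eq_bigr do rewrite ptest_det.
apply: (@cesaro_real_cvg R (fun t => ((rr K t == i) : nat)%:R) N) => // t.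
by rewrite rr_per.
Qed.


Lemma EEP_rr : EEP sI pol = (N.+1%:R / 2)%:E.
Proof.
rewrite /EEP; under eq_bigr do rewrite (Et_rr _).2.
rewrite sum_pw_fin // sumr_const card_ord; congr (_%:E).
by rewrite -mulr_natr; field.
Qed.

Lemma WEP_rr : WEP sI pol = (N.+1%:R / 2)%:E.
Proof.
by rewrite /WEP; under eq_bigr do rewrite (Et_rr _).2; rewrite bigmaxe_const.
Qed.

Lemma sumT_rr t : \sum_(e < N) pw R N * Tdet sI pol e t = (N.+1%:R / 2)%:E.
Proof.
under eq_bigr do rewrite T_rr.
rewrite sum_pw_fin // sum_dd_e; congr (_%:E); by field.
Qed.

Lemma MEP_rr : MEP sI pol = (N.+1%:R / 2)%:E.
Proof.
apply/le_anti/andP; split.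
  by apply: ge_ereal_sup => _ [t _ <-]; rewrite sumT_rr.
by apply: ereal_sup_ubound; exists 0%N => //; rewrite sumT_rr.
Qed.

Lemma WMP_rr : WMP sI pol = N%:R%:E.
Proof.
apply/le_anti/andP; split.
  by apply: ge_ereal_sup => _ [e [t ->]]; exact: T_rr_le.
apply: ereal_sup_ubound; exists ord0, 1%N.
by rewrite T_rr (dd_max ord0).
Qed.

Lemma EMP_rr : EMP sI pol = N%:R%:E.
Proof.
rewrite /EMP; under eq_bigr do rewrite Mt_rr.
rewrite sum_pw_fin // sumr_const card_ord; congr (_%:E).
by rewrite -mulr_natr; field.
Qed.

Lemma maxT_rr t : maxT sI pol t = N%:R%:E.
Proof.
apply/le_anti/andP; split; first by apply: bigmaxe_le => e; exact: T_rr_le.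
apply: le_trans (le_bigmaxe _ (rr K (t + K))).
by rewrite T_rr dd_max2.
Qed.

Lemma MWP_rr : cvgn (Defs.cesaro (maxT sI pol)) /\ MWP sI pol = N%:R%:E.
Proof.
rewrite /MWP (_ : maxT sI pol = fun _ => N%:R%:E); last first.
  by apply/funext => t; rewrite maxT_rr.
have [H1 H2] := @cesaro_per R (fun _ => N%:R) 1%N erefl (fun _ => erefl).
split => //; rewrite H2 big_ord1 invr1 mul1r //.
Qed.

End RR.

Section Gen3.
Variable (R : realType).
Local Open Scope ereal_scope.

Lemma Tdet_ge0 n m (s : 'I_m -> {set 'I_n}) (pol : policy R m) e t :
  is_policy pol -> 0 <= Tdet s pol e t.
Proof. by move=> P; apply: nneseries_ge0 => h _ _; rewrite lee_fin pmiss_ge0. Qed.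

Lemma avg_le_max n (x : 'I_n -> \bar R) : (0 < n)%N -> (forall e, 0 <= x e) ->
  \sum_(e < n) pw R n * x e <= \big[maxe/-oo]_(e < n) x e.
Proof.
move=> n0 x0; set M := \big[maxe/-oo]_(e < n) x e.
have xM e : x e <= M by exact: le_bigmaxe.
case EM : M => [r| |]; last 2 first.
- exact: leey.
- by have := xM (Ordinal n0); rewrite EM; move/(le_trans (x0 _)).
apply: (@le_trans _ _ (\sum_(e < n) pw R n * r%:E)).
  apply: lee_sum => e _; apply: lee_wpmul2l; first by rewrite lee_fin invr_ge0 ler0n.
  by rewrite -EM.
rewrite sum_pw_fin // sumr_const card_ord lee_fin.
rewrite -[(r *+ n)%R]mulr_natl mulrA mulVf ?mul1r // pnatr_eq0 -lt0n //.
Qed.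

Lemma cesaro_const (c : \bar R) : 0 <= c ->
  (Defs.cesaro (fun _ : nat => c) @ \oo --> c)%classic.
Proof.
move=> c0; apply: cvg_near_cst; exists 1%N => // H /= H1.
case: H H1 => // H _.
case: c c0 => [r| |] // _.
  rewrite /Defs.cesaro sumEFin sumr_const card_ord -EFinM; congr (_%:E).
  by rewrite -[(r *+ _)%R]mulr_natl mulrA mulVf ?mul1r // pnatr_eq0.
rewrite /Defs.cesaro big_ord_recr /= addey ?gt0_muley // ?lte_fin ?invr_gt0 ?ltr0n //.
rewrite gt_eqF // (@lt_le_trans _ _ 0) ?ltNy0 //.
by apply: sume_ge0.
Qed.

End Gen3.

Section Stoch.
Variables (R : realType) (K : nat).
Local Notation N := K.+1.
Local Notation sI := (@sI K).
Local Notation B := ((N.+1)%:R / 2 : R).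
Local Open Scope ereal_scope.

Lemma sumpwT_ge (pol : policy R N) t : is_policy pol ->
  B%:E <= \sum_(e < N) pw R N * Tdet sI pol e t.
Proof.
move=> P; rewrite -ge0_sume_distrr; last by move=> e _; exact: Tdet_ge0.
apply: le_trans (lee_wpmul2l _ (sumT_ge t P)); last by rewrite lee_fin invr_ge0 ler0n.
by rewrite -EFinM lee_fin le_eqVlt; apply/orP; left; apply/eqP; field.
Qed.

Lemma MEP_ge (pol : policy R N) : is_policy pol -> B%:E <= MEP sI pol.
Proof.
move=> P; apply: le_trans (sumpwT_ge 0 P) _.
by apply: ereal_sup_ubound; exists 0%N.
Qed.

Lemma EEP_ge (pol : policy R N) : valid sI pol -> B%:E <= EEP sI pol.
Proof.
move=> [P [_ [Hc _]]].
have cv : ((fun H => \sum_(e < N) pw R N * Defs.cesaro (Tdet sI pol e) H) @ \oo -->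
            EEP sI pol)%classic.
  apply: cvg_nnesum.
    move=> e _; near=> H; apply: mule_ge0; first by rewrite lee_fin invr_ge0 ler0n.
    apply: mule_ge0; first by rewrite lee_fin invr_ge0 ler0n.
    by apply: sume_ge0 => t _; exact: Tdet_ge0.
  by move=> e _; apply: cvgeZl => //; exact: Hc.
apply: cvge_ge cv; exists 1%N => // H /= H1.
apply: (@le_trans _ _ ((H%:R^-1)%:E * \sum_(t < H) \sum_(e < N) pw R N * Tdet sI pol e t)).
  apply: (@le_trans _ _ ((H%:R^-1)%:E * \sum_(t < H) B%:E)).
    rewrite sumEFin sumr_const card_ord -EFinM lee_fin.
    rewrite -[(B *+ _)%R]mulr_natl mulrA mulVf ?mul1r // pnatr_eq0 -lt0n //.
  apply: lee_wpmul2l; first by rewrite lee_fin invr_ge0 ler0n.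
  by apply: lee_sum => t _; exact: sumpwT_ge.
rewrite exchange_big ge0_sume_distrr /=; last first.
  by move=> e _; apply: sume_ge0 => t _; apply: mule_ge0; [rewrite lee_fin invr_ge0 ler0n|exact: Tdet_ge0].
rewrite le_eqVlt; apply/orP; left; apply/eqP.
apply: eq_bigr => e _; rewrite /Defs.cesaro.
rewrite -ge0_sume_distrr; last by move=> t _; exact: Tdet_ge0.
by rewrite muleCA.
Unshelve. all: end_near.
Qed.

Lemma Et_ge0 (pol : policy R N) e : valid sI pol -> 0 <= Et sI pol e.
Proof.
move=> [P [_ [Hc _]]]; apply: cvge_ge (Hc e); exists 0%N => // H _.
apply: mule_ge0; first by rewrite lee_fin invr_ge0 ler0n.
by apply: sume_ge0 => t _; exact: Tdet_ge0.
Qed.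

Lemma WEP_ge (pol : policy R N) : valid sI pol -> B%:E <= WEP sI pol.
Proof.
move=> V; apply: le_trans (EEP_ge V) _.
by apply: avg_le_max => // e; exact: Et_ge0.
Qed.

End Stoch.

Lemma prod_ind (R : realType) k (b : 'I_k -> bool) :
  \prod_(j < k) ((b j : nat)%:R : R) = ([forall j, b j] : nat)%:R.
Proof.
case: (boolP [forall j, b j]) => [/forallP H|/forallPn [j Hj]].
  by rewrite big1 // => j _; rewrite H.
by rewrite (bigD1 j) //= (negbTE Hj) mul0r.
Qed.

Lemma geo_series (R : realType) (a : R) : 0 < a -> a <= 1 ->
  (\sum_(0 <= h <oo) ((1 - a) ^+ h)%:E = (a^-1)%:E)%E.
Proof.
move=> a0 a1; apply: cvg_lim => //.
rewrite (_ : (fun n => \sum_(0 <= h < n) ((1 - a) ^+ h)%:E)%E =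
             (fun n => (series (geometric 1 (1 - a)) n)%:E)); last first.
  apply/funext => n; rewrite sumEFin /series /=; congr (_%:E).
  by apply: eq_bigr => h _; rewrite mul1r.
apply: cvg_EFin; first by exists 0%N.
have := @cvg_geometric_series R 1 (1 - a).
rewrite subKr mul1r; apply.
rewrite ger0_norm ?subr_ge0 //; by rewrite ltrBlDr ltrDl.
Qed.

Section Mless.
Variables (R : realType) (K : nat).
Local Notation N := K.+1.
Local Notation sI := (@sI K).

Lemma pmiss_mless (q : {ffun 'I_N -> R}) e t h : is_dist q ->
  pmiss sI (mless_pol q) e t h = (1 - q e) ^+ h.
Proof.
move=> [q0 q1].
pose g := fun (j : nat) (x : 'I_N) => ((((t <= j)%N ==> (e \notin sI x)) : bool) : nat)%:R : R.
have -> : pmiss sI (mless_pol q) e t h =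
   \sum_(w : (t + h).-tuple 'I_N) hprob (mless_pol q) w * \prod_(j < t + h) g j (tnth w j).
  by apply: eq_bigr => w _; rewrite /g prod_ind.
rewrite sum_mless_prod.
have Hs j : \sum_(x : 'I_N) q x * g j x = if (t <= j)%N then 1 - q e else 1.
  rewrite /g; case: (t <= j)%N => /=.
    rewrite -[in RHS]q1 (bigD1 e) //= [in RHS](bigD1 e) //= /sI finset.in_set1 eqxx /=.
    rewrite mulr0n mulr0 add0r addrAC subrr add0r.
    apply: eq_bigr => x Hx.
    by rewrite finset.in_set1 eq_sym (negbTE Hx) mulr1.
  by under eq_bigr do rewrite mulr1.
under eq_bigr do rewrite Hs.
rewrite big_split_ord /= big1 ?mul1r; last by move=> j _; rewrite leqNgt ltn_ord.
under eq_bigr do rewrite leq_addr.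
by rewrite prodr_const card_ord.
Qed.


Local Open Scope ereal_scope.

Lemma T_mless (q : {ffun 'I_N -> R}) e : is_dist q ->
  Tdet sI (mless_pol q) e = fun _ => \sum_(0 <= h <oo) ((1 - q e) ^+ h)%:E.
Proof.
move=> D; apply/funext => t; rewrite /Tdet.
by under eq_eseriesr do rewrite pmiss_mless //.
Qed.

Lemma q_le1 (q : {ffun 'I_N -> R}) e : is_dist q -> (q e <= 1)%R.
Proof.
move=> [q0 q1]; rewrite -q1 (bigD1 e) //= lerDl.
by apply: sumr_ge0 => i _.
Qed.

Lemma Tq_ge (q : {ffun 'I_N -> R}) e : is_dist q ->
  (2 * N%:R - N%:R ^+ 2 * q e)%:E <= \sum_(0 <= h <oo) ((1 - q e) ^+ h)%:E.
Proof.
move=> D; have q0 := D.1 e; have q1 := q_le1 e D.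
case: (ltgtP (q e) 0%R) => [|qp|->].
- by rewrite ltNge q0.
- rewrite geo_series // lee_fin -subr_ge0.
  have -> : ((q e)^-1 - (2 * N%:R - N%:R ^+ 2 * q e) = (N%:R * q e - 1) ^+ 2 / q e)%R.
    by field; rewrite gt_eqF.
  by rewrite divr_ge0 ?sqr_ge0 // ltW.
- rewrite mulr0 subr0 subr0.
  have H := @nneseries_lim_ge R (fun h => ((1 ^+ h)%R)%:E) xpredT 0 (2 * N)%N.
  apply: le_trans (H _); last by move=> k _ _; rewrite lee_fin expr1n ler01.
  rewrite sumEFin lee_fin big_mkord.
  under eq_bigr do rewrite expr1n.
  by rewrite sumr_const card_ord natrM.
Qed.

Lemma Et_mless (q : {ffun 'I_N -> R}) e : is_dist q ->
  Et sI (mless_pol q) e = \sum_(0 <= h <oo) ((1 - q e) ^+ h)%:E.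
Proof.
move=> D; rewrite /Et T_mless //; apply: cvg_lim => //.
apply: cesaro_const; apply: nneseries_ge0 => h _ _.
by rewrite lee_fin exprn_ge0 // subr_ge0 q_le1.
Qed.

Lemma EEP_mless_ge (q : {ffun 'I_N -> R}) : is_dist q -> N%:R%:E <= EEP sI (mless_pol q).
Proof.
move=> D; rewrite /EEP.
apply: (@le_trans _ _ (\sum_(e < N) pw R N * (2 * N%:R - N%:R ^+ 2 * q e)%:E)).
  rewrite sum_pw_fin // lee_fin sumrB -!mulr_sumr D.2 mulr1 !sumr_const card_ord.
  rewrite le_eqVlt; apply/orP; left; apply/eqP.
  rewrite -[(N%:R *+ N)%R]mulr_natr; by field.
apply: lee_sum => e _; rewrite Et_mless //.
apply: lee_wpmul2l; first by rewrite lee_fin invr_ge0 ler0n.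
exact: Tq_ge.
Qed.

Lemma Et_mless_ge0 (q : {ffun 'I_N -> R}) e : is_dist q -> 0 <= Et sI (mless_pol q) e.
Proof.
move=> D; rewrite Et_mless //; apply: nneseries_ge0 => h _ _.
by rewrite lee_fin exprn_ge0 // subr_ge0 q_le1.
Qed.

Lemma WEP_mless_ge (q : {ffun 'I_N -> R}) : is_dist q -> N%:R%:E <= WEP sI (mless_pol q).
Proof.
move=> D; apply: le_trans (EEP_mless_ge D) _.
by apply: avg_le_max => // e; exact: Et_mless_ge0.
Qed.

Definition qU : {ffun 'I_N -> R} := [ffun _ => (N%:R^-1)%R].

Lemma qU_dist : is_dist qU.
Proof.
split; first by move=> i; rewrite ffunE invr_ge0 ler0n.
under eq_bigr do rewrite ffunE.
by rewrite sumr_const card_ord -[(_ *+ N)%R]mulr_natr mulVf // pnatr_eq0.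
Qed.

Lemma Et_qU e : Et sI (mless_pol qU) e = N%:R%:E.
Proof.
rewrite Et_mless; last exact: qU_dist.
rewrite (_ : qU e = N%:R^-1)%R; last by rewrite /qU ffunE.
rewrite geo_series ?invrK //.
by rewrite invf_le1 ?ltr0n // ler1n.
Qed.

Lemma EEP_qU : EEP sI (mless_pol qU) = N%:R%:E.
Proof.
rewrite /EEP; under eq_bigr do rewrite Et_qU.
rewrite sum_pw_fin // sumr_const card_ord; congr (_%:E).
by rewrite -[(N%:R *+ N)%R]mulr_natr mulrA mulVf ?mul1r // pnatr_eq0.
Qed.

Lemma WEP_qU : WEP sI (mless_pol qU) = N%:R%:E.
Proof. by rewrite /WEP; under eq_bigr do rewrite Et_qU; rewrite bigmaxe_const. Qed.

End Mless.

Section Det.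
Variables (R : realType) (K : nat) (sig : nat -> 'I_K.+1).
Local Notation N := K.+1.
Local Notation sI := (@sI K).
Local Notation pol := (det_pol R sig).
Local Notation nohit e t h := ([forall j : 'I_h, e \notin sI (sig (t + j)%N)]).

Lemma nohit_mono e t h h' : nohit e t h -> (h' <= h)%N -> nohit e t h'.
Proof.
move=> /forallP H hh; apply/forallP => j.
exact: (H (widen_ord hh j)).
Qed.

Local Open Scope ereal_scope.

Lemma T_det_ge e t G : nohit e t G -> (G.+1%:R)%:E <= Tdet sI pol e t.
Proof.
move=> H; rewrite /Tdet.
have L := @nneseries_lim_ge R (fun h => (pmiss sI pol e t h)%:E) xpredT 0 G.+1.
apply: le_trans (L _); last by move=> k _ _; rewrite lee_fin pmiss_ge0 //; exact: det_policy.
rewrite big_mkord sumEFin lee_fin.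
under eq_bigr => h _ do rewrite pmiss_det (nohit_mono H (ltnSE (ltn_ord h))).
by rewrite sumr_const card_ord.
Qed.

Lemma exists_far t : exists e, nohit e t K.
Proof.
pose Hs := [set sig (t + j)%N | j : 'I_K].
have : (0 < #|~: Hs|)%N.
  have := cardsC Hs; rewrite card_ord => HC.
  have Hh : (#|Hs| <= K)%N by rewrite (leq_trans (leq_imset_card _ _)) // card_ord.
  move: HC Hh; lia.
move/card_gt0P => [e]; rewrite finset.in_setC => He.
exists e; apply/forallP => j; rewrite /sI finset.in_set1.
apply: contra He => /eqP ->; apply/imsetP; by exists j.
Qed.

Lemma far_T t : exists e, N%:R%:E <= Tdet sI pol e t.
Proof. by have [e He] := exists_far t; exists e; exact: T_det_ge. Qed.

Lemma WMP_det_ge : N%:R%:E <= WMP sI pol.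
Proof.
have [e He] := far_T 0; apply: le_trans He _.
by apply: ereal_sup_ubound; exists e, 0%N.
Qed.

Lemma maxT_det_ge t : N%:R%:E <= maxT sI pol t.
Proof. by have [e He] := far_T t; apply: le_trans He (le_bigmaxe _ e). Qed.

Lemma MWP_det_ge : cvgn (Defs.cesaro (maxT sI pol)) -> N%:R%:E <= MWP sI pol.
Proof.
move=> Hc; apply: cvge_ge Hc; exists 1%N => // H /= H1.
apply: (@le_trans _ _ ((H%:R^-1)%:E * \sum_(t < H) N%:R%:E)).
  rewrite sumEFin sumr_const card_ord -EFinM lee_fin.
  rewrite -[(N%:R *+ _)%R]mulr_natl mulrA mulVf ?mul1r // pnatr_eq0 -lt0n //.
apply: lee_wpmul2l; first by rewrite lee_fin invr_ge0 ler0n.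
by apply: lee_sum => t _; exact: maxT_det_ge.
Qed.


Local Close Scope ereal_scope.

Definition cnt (e : 'I_N) (L : nat) : nat := (\sum_(j < L) ((sig j == e) : nat))%N.

Lemma cnt_ge e G : (forall t, exists j : 'I_G, sig (t + j)%N = e) ->
  forall k, (k <= cnt e (k * G))%N.
Proof.
move=> Hh; elim => [|k IH] //.
rewrite /cnt mulSnr big_split_ord /=.
have [j Hj] := Hh (k * G)%N.
rewrite -/(cnt e (k * G)) -addn1 leq_add //.
by rewrite (bigD1 j) //= Hj eqxx.
Qed.

Lemma sum_cnt L : (\sum_(e < N) cnt e L = L)%N.
Proof.
rewrite /cnt exchange_big /=.
rewrite -[X in _ = X]card_ord -sum1_card; apply: eq_bigr => j _.
rewrite (bigD1 (sig j)) //= eqxx big1 // => e He.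
by rewrite eq_sym (negbTE He).
Qed.

Lemma sum_inv_le (G : 'I_N -> nat) : (forall e, 0 < G e)%N ->
  (forall e t, exists j : 'I_(G e), sig (t + j)%N = e) ->
  \sum_(e < N) ((G e)%:R : R)^-1 <= 1.
Proof.
move=> G0 Hh; set L := (\prod_(e < N) G e)%N.
have L0 : (0 < L)%N by apply: prodn_gt0.
have dv e : (L %/ G e * G e = L)%N.
  by apply: divnK; rewrite /L (bigD1 e) //= dvdn_mulr.
have le1 : (\sum_(e < N) (L %/ G e) <= L)%N.
  rewrite -[X in (_ <= X)%N](sum_cnt L); apply: leq_sum => e _.
  by have := cnt_ge (Hh e) (L %/ G e); rewrite dv.
have Lpos : (0 < (L%:R : R)) by rewrite ltr0n.
rewrite -(@ler_pM2l _ (L%:R)) // mulr1 mulr_sumr.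
apply: le_trans (_ : (\sum_(e < N) (L %/ G e)%N%:R <= L%:R)); last first.
  by rewrite -natr_sum ler_nat.
rewrite le_eqVlt; apply/orP; left; apply/eqP; apply: eq_bigr => e _.
have := dv e; move/(congr1 (fun x => (x%:R : R))); rewrite natrM => <-.
rewrite mulrK // unitfE pnatr_eq0 -lt0n //.
Qed.

Lemma sum_ge_sq (x : 'I_N -> R) : (forall e, 0 < x e) -> \sum_(e < N) (x e)^-1 <= 1 ->
  N%:R ^+ 2 <= \sum_(e < N) x e.
Proof.
move=> x0 H.
have Hx e : 2 * N%:R - N%:R ^+ 2 * (x e)^-1 <= x e.
  rewrite -subr_ge0.
  have -> : x e - (2 * N%:R - N%:R ^+ 2 * (x e)^-1) = (x e - N%:R) ^+ 2 / x e.
    by field; rewrite gt_eqF.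
  by rewrite divr_ge0 ?sqr_ge0 // ltW.
apply: le_trans (ler_sum _ (fun e _ => Hx e)).
rewrite sumrB -!mulr_sumr sumr_const card_ord -[(N%:R *+ N)%R]mulr_natr.
have : N%:R ^+ 2 * \sum_(e < N) (x e)^-1 <= N%:R ^+ 2 by rewrite ler_piMr ?exprn_gt0 ?ltr0n.
rewrite !expr2; nra.
Qed.

Local Open Scope ereal_scope.

Lemma EMP_det_ge : valid sI pol -> N%:R%:E <= EMP sI pol.
Proof.
move=> [P [Hf _]].
have T0 e : 0 <= Mt sI pol e.
  apply: le_trans (@Tdet_ge0 R N N sI pol e 0%N P) _; apply: ereal_sup_ubound; by exists 0%N.
have Mfin e : Mt sI pol e = (fine (Mt sI pol e))%:E.
  have := Hf e; have := T0 e; case: (Mt sI pol e) => //.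
have Tle e t : Tdet sI pol e t <= (fine (Mt sI pol e))%:E.
  by rewrite -Mfin; apply: ereal_sup_ubound; exists t.
have g0 e : (0 <= fine (Mt sI pol e))%R.
  by rewrite -lee_fin -Mfin.
pose G e := Num.truncn (fine (Mt sI pol e)).
have Hh e t : exists j : 'I_(G e), sig (t + j)%N = e.
  case: (boolP (nohit e t (G e))) => [H|].
    have := le_trans (T_det_ge H) (Tle e t); rewrite lee_fin.
    by rewrite leNgt real_truncnS_gt ?num_real.
  move/forallPn => [j]; rewrite negbK /sI finset.in_set1 => /eqP He.
  by exists j; rewrite -He.
have G0 e : (0 < G e)%N by have [j _] := Hh e 0%N; apply: leq_ltn_trans (ltn_ord j).
have Hs := sum_inv_le G0 Hh.
have Hsq : (N%:R ^+ 2 <= \sum_(e < N) (G e)%:R :> R)%R.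
  by apply: sum_ge_sq => // e; rewrite ltr0n.
have HG : (\sum_(e < N) (G e)%:R <= \sum_(e < N) fine (Mt sI pol e) :> R)%R.
  by apply: ler_sum => e _; rewrite /G truncn_le.
rewrite /EMP; under eq_bigr do rewrite Mfin.
rewrite sum_pw_fin // lee_fin mulrC ler_pdivlMr ?ltr0n //.
by rewrite -expr2; apply: le_trans HG.
Qed.

End Det.

Unset Implicit Arguments.

Lemma inf_eq (R : realType) (X : Type) (S : set X) (f : X -> \bar R) v x0 :
  S x0 -> f x0 = v -> (forall x, S x -> (v <= f x)%E) -> ereal_inf (f @` S) = v.
Proof.
move=> Sx0 fx0 H; apply/le_anti/andP; split.
  by apply: ereal_inf_lbound; exists x0.
by apply: le_ereal_inf_tmp => _ [x Sx <-]; exact: H.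
Qed.

Theorem lemma7 (R : realType) (eps : R) : 0 < eps ->
  exists (n m : nat) (s : 'I_m -> {set 'I_n}) (A B : R),
    (0 < n)%N /\
    (@optM_MAX R n m s) = A%:E /\ (@optM_SUM R n m s) = A%:E /\ (@optD_WMP R n m s) = A%:E /\
    (@optD_EMP R n m s) = A%:E /\ (@optD_MWP R n m s) = A%:E /\
    (@optD_WEP R n m s) = B%:E /\ (@optD_EEP R n m s) = B%:E /\ (@optD_MEP R n m s) = B%:E /\
    (@opt_MAX R n m s) = B%:E /\ (@opt_SUM R n m s) = B%:E /\
    (2 - eps) * B <= A.
Proof.
move=> e0; set K := Num.truncn (2 / eps).
exists K.+1, K.+1, (@sI K), K.+1%:R, (K.+2%:R / 2).
have rrV : valid (@sI K) (det_pol R (rr K)) := @rr_valid R K.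
split => //.
split.
  apply: (@inf_eq _ _ _ _ _ (qU R K)); [exact: qU_dist|exact: WEP_qU|].
  by move=> q D; exact: WEP_mless_ge.
split.
  apply: (@inf_eq _ _ _ _ _ (qU R K)); [exact: qU_dist|exact: EEP_qU|].
  by move=> q D; exact: EEP_mless_ge.
split.
  apply: (@inf_eq _ _ _ _ _ (rr K)); [exact: rrV|exact: WMP_rr|].
  by move=> sg _; exact: WMP_det_ge.
split.
  apply: (@inf_eq _ _ _ _ _ (rr K)); [exact: rrV|exact: EMP_rr|].
  by move=> sg V; exact: EMP_det_ge.
split.
  apply: (@inf_eq _ _ _ _ _ (rr K)); [split; [exact: rrV|exact: (MWP_rr R K).1]|exact: (MWP_rr R K).2|].
  by move=> sg [_ C]; exact: MWP_det_ge.
split.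
  apply: (@inf_eq _ _ _ _ _ (rr K)); [exact: rrV|exact: WEP_rr|].
  by move=> sg V; exact: WEP_ge.
split.
  apply: (@inf_eq _ _ _ _ _ (rr K)); [exact: rrV|exact: EEP_rr|].
  by move=> sg V; exact: EEP_ge.
split.
  apply: (@inf_eq _ _ _ _ _ (rr K)); [exact: rrV|exact: MEP_rr|].
  by move=> sg V; exact: MEP_ge V.1.
split.
  apply: (@inf_eq _ _ _ _ _ (det_pol R (rr K))); [exact: rrV|exact: WEP_rr|].
  by move=> p V; exact: WEP_ge.
split.
  apply: (@inf_eq _ _ _ _ _ (det_pol R (rr K))); [exact: rrV|exact: EEP_rr|].
  by move=> p V; exact: EEP_ge.
have HK : 2 / eps < K.+1%:R by rewrite /K real_truncnS_gt ?num_real.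
rewrite ltr_pdivrMr // in HK.
rewrite -!natr1 add0r in HK *.
have k0 : 0 <= (K%:R : R) by rewrite ler0n.
rewrite mulrA ler_pdivrMr; last lra.
nra.
Qed.
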